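(* Let $\alpha\in(0,1]$, $\lambda_\alpha=\sqrt{\log(1/\alpha)/2}$, $p_1,\dots,p_m\in[0,1]$, and consider the DKW local tests $\varphi_A=\max_{t\in[0,1]}\mathbf 1\{i_A(t)>|A|t+\sqrt{|A|}\lambda_\alpha\}$. Let $$\hat m_0=\min_{t\in[0,1)}\Big\lfloor\Big(\frac{\lambda_\alpha}{2(1-t)}+\sqrt{\frac{\lambda_\alpha^2}{4(1-t)^2}+\frac{m-i(t)}{1-t}}\Big)^2\Big\rfloor\wedge m,$$ let $\sigma$ be a permutation with $p_{\sigma(1)}\le\dots\le p_{\sigma(m)}$, $p_{(k)}=p_{\sigma(k)}$, $R_k=\{\sigma(1),\dots,\sigma(k)\}$, $\zeta_k=k\wedge\lfloor\hat m_0p_{(k)}+\sqrt{\hat m_0}\lambda_\alpha\rfloor$, and $\mathfrak R=(R_k,\zeta_k)_{1\le k\le m}$. Then $\hat V^{\mathrm{IP}}_\varphi(S)=\hat V^{\mathrm{JER}}_{\mathfrak R}(S)$ for every $S\subseteq\{1,\dots,m\}$.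
   Context: $i_A(t)=\#\{j\in A:p_j\le t\}$, $i(t)=i_{\{1,\dots,m\}}(t)$. $\hat V^{\mathrm{IP}}_\varphi(S)=\max\{|A\cap S|:A\subseteq\{1,\dots,m\},\varphi_A=0\}$. For a reference family $(R_k,\zeta_k)_{k\in\mathcal K}$: $\mathfrak A(\mathfrak R)=\{A\subseteq\{1,\dots,m\}:\forall k,|R_k\cap A|\le\zeta_k\}$ and $\hat V^{\mathrm{JER}}_{\mathfrak R}(S)=\max_{A\in\mathfrak A(\mathfrak R)}|S\cap A|$. *)

(* Defs.v *)
From HB Require Import structures.
From mathcomp Require Import all_boot all_order all_algebra perm.
From mathcomp Require Import all_classical all_reals exp.
Set Implicit Arguments. Unset Strict Implicit. Unset Printing Implicit Defensive.
Import Order.TTheory GRing.Theory Num.Theory.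
Local Open Scope ring_scope.

Section Defs.
Variables (R : realType) (m : nat) (p : 'I_m -> R) (alpha : R).

Definition lam : R := Num.sqrt (ln (1 / alpha) / 2).

Definition iA (A : {set 'I_m}) (t : R) : nat := #|[set j in A | p j <= t]|.
Definition iall (t : R) : nat := iA [set: 'I_m] t.

Definition phiDKW (A : {set 'I_m}) : bool :=
  `[< exists t : R, 0 <= t <= 1 /\
        #|A|%:R * t + Num.sqrt (#|A|%:R) * lam < (iA A t)%:R >].

Definition VIP (S : {set 'I_m}) : nat :=
  \max_(A : {set 'I_m} | ~~ phiDKW A) #|A :&: S|.

Definition gm0 (t : R) : R :=
  (lam / (2 * (1 - t)) +
   Num.sqrt (lam ^+ 2 / (4 * (1 - t) ^+ 2) + (m%:R - (iall t)%:R) / (1 - t))) ^+ 2.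

(* n is a candidate for  min_{t in [0,1)} floor(gm0 t) /\ m *)
Definition m0cand (n : nat) : bool :=
  `[< n = m \/ exists t : R, 0 <= t < 1 /\ Num.floor (gm0 t) = n%:Z >].

Lemma m0cand_ex : exists n, m0cand n.
Proof. by exists m; apply/asboolP; left. Qed.

Definition m0hat : nat := ex_minn m0cand_ex.

Variable sigma : 'S_m.
(* for k : 'I_m, the paper's index is k+1: R_{k+1} = {sigma(1..k+1)} *)
Definition Rk (k : 'I_m) : {set 'I_m} := [set sigma j | j : 'I_m & (j <= k)%N].
Definition zetak (k : 'I_m) : int :=
  Num.min (k.+1)%:Z
    (Num.floor (m0hat%:R * p (sigma k) + Num.sqrt (m0hat%:R) * lam)).

Definition JERadm (A : {set 'I_m}) : bool :=
  [forall k : 'I_m, (#|Rk k :&: A|%:Z <= zetak k)].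

Definition VJER (S : {set 'I_m}) : nat :=
  \max_(A : {set 'I_m} | JERadm A) #|S :&: A|.
End Defs.

(* Main.v *)
Require Import Defs.
From HB Require Import structures.
From mathcomp Require Import all_boot all_order all_algebra perm.
From mathcomp Require Import all_classical all_reals exp.
From mathcomp Require Import ring lra zify.
Import Order.TTheory GRing.Theory Num.Theory.
Local Open Scope ring_scope.
Module Helpers.
Set Implicit Arguments. Unset Strict Implicit.

Lemma quad1 (R : realType) (s h q u y : R) : 0 < s -> 0 <= y -> 0 <= q ->
  q ^+ 2 = h ^+ 2 + u -> s * y ^+ 2 - 2 * s * h * y <= s * u -> y <= h + q.
Proof.
move=> s0 y0 q0 hq hs.
have h1 : y ^+ 2 - 2 * h * y <= u.
  rewrite -(ler_pM2l s0); rewrite mulrBr; lra.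
have h2 : (y - h) ^+ 2 <= q ^+ 2 by rewrite hq; lra.
rewrite -lerBlDl; nra.
Qed.

Lemma quad2 (R : realType) (s h q u y : R) : 0 < s -> 0 <= y -> 0 <= h ->
  0 <= u -> 0 <= q -> q ^+ 2 = h ^+ 2 + u -> y ^+ 2 <= (h + q) ^+ 2 ->
  s * y ^+ 2 - 2 * s * h * y <= s * u.
Proof.
move=> s0 y0 h0 u0 q0 hq hy.
have yr : y <= h + q by nra.
have hq' : h <= q by nra.
have h2 : (y - h) ^+ 2 <= q ^+ 2 by nra.
have h1 : y ^+ 2 - 2 * h * y <= u by nra.
nra.
Qed.


Lemma Gequiv (R : realType) (t a M l : R) : 0 <= t < 1 -> 0 <= a -> 0 <= M -> 0 <= l ->
  (a <= (l / (2 * (1 - t)) +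
   Num.sqrt (l ^+ 2 / (4 * (1 - t) ^+ 2) + M / (1 - t))) ^+ 2) <->
  ((1 - t) * a - l * Num.sqrt a <= M).
Proof.
move=> /andP[t0 t1] a0 M0 l0.
set s := 1 - t.
have s0 : 0 < s by rewrite /s; lra.
have sn : s != 0 by rewrite gt_eqF.
set h := l / (2 * s).
set u := M / s.
have eh : l ^+ 2 / (4 * s ^+ 2) = h ^+ 2 by rewrite /h; field; rewrite sn.
rewrite eh.
have h0 : 0 <= h by rewrite /h divr_ge0 // mulr_ge0 // ltW.
have u0 : 0 <= u by rewrite /u divr_ge0 // ltW.
have el : l = 2 * s * h by rewrite /h; field.
have eM : M = s * u by rewrite /u; field.
set y := Num.sqrt a.
have y0 : 0 <= y by apply: sqrtr_ge0.
have ea : a = y ^+ 2 by rewrite /y sqr_sqrtr.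
set q := Num.sqrt (h ^+ 2 + u).
have q0 : 0 <= q by apply: sqrtr_ge0.
have eq : q ^+ 2 = h ^+ 2 + u by rewrite /q sqr_sqrtr //; nra.
rewrite ea el eM; split.
- move=> H; have := quad2 s0 y0 h0 u0 q0 eq H; lra.
- move=> H.
  have := quad1 s0 y0 q0 eq. 
  have -> : s * y ^+ 2 - 2 * s * h * y = s * y ^+ 2 - 2 * s * h * y by [].
  move=> /(_ ltac:(lra)) yr; nra.
Qed.


Lemma iA_eq (R : realType) m (p : 'I_m -> R) (A : {set 'I_m}) (t : R) :
  iA p A t = #|A :&: [set j | p j <= t]|.
Proof. by rewrite /iA; apply: eq_card => j; rewrite !inE. Qed.

Lemma lam_ge0 (R : realType) (alpha : R) : 0 <= lam alpha.
Proof. exact: sqrtr_ge0. Qed.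

Lemma card_split (R : realType) m (p : 'I_m -> R) (A : {set 'I_m}) (t : R) :
  (#|A| <= iA p A t + (m - iall p t))%N /\ (iall p t <= m)%N.
Proof.
rewrite /iall !iA_eq finset.setTI.
have E1 := cardsID [set j | p j <= t] A.
have E2 := cardsC [set j | p j <= t]; rewrite card_ord in E2.
have S : (#|A :\: [set j | (p j <= t)%R]| <= #|~: [set j | (p j <= t)%R]|)%N.
  by apply: subset_leq_card; rewrite finset.setDE finset.subsetIr.
have L : forall a b c d x : nat, (a + b = x -> c + d = m -> b <= d -> x <= a + (m - c) /\ c <= m)%N.
  by move=> a b c d x; lia.
exact: L E1 E2 S.
Qed.

Lemma m0_le_m (R : realType) m (p : 'I_m -> R) alpha : (m0hat p alpha <= m)%N.
Proof.
rewrite /m0hat; case: ex_minnP => n _ Hmin; apply: Hmin.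
by apply/asboolP; left.
Qed.

Lemma m0_le_g (R : realType) m (p : 'I_m -> R) alpha t : 0 <= t < 1 ->
  (m0hat p alpha)%:R <= gm0 p alpha t.
Proof.
move=> t01.
have g0 : 0 <= gm0 p alpha t by rewrite /gm0 sqr_ge0.
have fl0 : 0 <= Num.floor (gm0 p alpha t) by rewrite floor_ge0.
set n := `|Num.floor (gm0 p alpha t)|%N.
have En : n%:Z = Num.floor (gm0 p alpha t) by rewrite /n gez0_abs.
have : (m0hat p alpha <= n)%N.
  rewrite /m0hat; case: ex_minnP => k _ Hmin; apply: Hmin.
  by apply/asboolP; right; exists t; split.
move=> Hle.
apply: (le_trans _ (floor_le _)); rewrite -En.
by rewrite -(pmulrn (R:=R)) /= ler_nat.
Qed.


Lemma phi0P (R : realType) m (p : 'I_m -> R) alpha (A : {set 'I_m}) :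
  ~~ phiDKW p alpha A <-> forall t, 0 <= t <= 1 ->
    (iA p A t)%:R <= #|A|%:R * t + Num.sqrt (#|A|%:R) * lam alpha.
Proof.
split.
- move/asboolPn => Hn t t01; rewrite leNgt; apply/negP => H; apply: Hn.
  by exists t; split.
- move=> H; apply/asboolPn => -[t [t01 Ht]].
  by have := H t t01; rewrite leNgt Ht.
Qed.

Lemma le_m0 (R : realType) m (p : 'I_m -> R) alpha (A : {set 'I_m}) :
  0 < alpha <= 1 -> ~~ phiDKW p alpha A -> (#|A| <= m0hat p alpha)%N.
Proof.
move=> ha /phi0P H.
rewrite /m0hat; case: ex_minnP => n /asboolP Hc _.
case: Hc => [->|[t [t01 ht]]].
  by rewrite -[X in (_ <= X)%N]card_ord max_card.
have t01' : 0 <= t <= 1 by case/andP: t01 => -> /ltW ->.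
have Hi := H t t01'.
case: (card_split p A t) => c1 c2.
have c1R : (#|A|%:R : R) <= (iA p A t)%:R + (m%:R - (iall p t)%:R).
  by rewrite -natrB // -natrD ler_nat.
have : (#|A|%:R : R) <= gm0 p alpha t.
  rewrite /gm0; apply/Gequiv => //.
  - by rewrite subr_ge0 ler_nat.
  - exact: lam_ge0.
  - lra.
move=> hg.
have : (#|A|%:Z <= Num.floor (gm0 p alpha t)).
  by rewrite floor_ge_int.
by rewrite ht lez_nat.
Qed.


Lemma Rk_card m (sigma : 'S_m) (k : 'I_m) : (#|Rk sigma k| <= k.+1)%N.
Proof.
rewrite /Rk; apply: leq_trans (leq_imset_card _ _) _.
have -> : [set j : 'I_m | (j <= k)%N] = [set widen_ord (ltn_ord k) i | i : 'I_k.+1].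
  apply/setP => j; rewrite inE; apply/idP/imsetP.
  - move=> hj; exists (Ordinal (hj : (j < k.+1)%N)) => //; exact: val_inj.
  - by case=> i _ ->; rewrite /= -ltnS.
apply: leq_trans (leq_imset_card _ _) _.
by rewrite -[X in (_ <= X)%N]card_ord max_card.
Qed.

Lemma Rk_sub (R : realType) m (p : 'I_m -> R) (sigma : 'S_m) (k : 'I_m) :
  (forall i j : 'I_m, (i <= j)%N -> p (sigma i) <= p (sigma j)) ->
  Rk sigma k \subset [set j | p j <= p (sigma k)].
Proof.
move=> hs; apply/fintype.subsetP => j /imsetP [i]; rewrite inE => hi ->.
by rewrite inE hs.
Qed.

Lemma phi0_adm (R : realType) m (alpha : R) (p : 'I_m -> R) (sigma : 'S_m)
  (halpha : 0 < alpha <= 1)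
  (hp : forall j, 0 <= p j <= 1)
  (hsigma : forall i j : 'I_m, (i <= j)%N -> p (sigma i) <= p (sigma j))
  (A : {set 'I_m}) : ~~ phiDKW p alpha A -> JERadm p alpha sigma A.
Proof.
move=> Hphi; have Hm := le_m0 halpha Hphi.
move/phi0P: Hphi => H.
apply/forallP => k; rewrite /zetak le_min; apply/andP; split.
  by rewrite lez_nat; apply: leq_trans (subset_leq_card (finset.subsetIl _ _)) (Rk_card _ _).
rewrite floor_ge_int.
set t := p (sigma k).
have t01 : 0 <= t <= 1 by apply: hp.
have c1 : (#|Rk sigma k :&: A| <= iA p A t)%N.
  rewrite iA_eq; apply: subset_leq_card; rewrite finset.setIC.
  by apply: finset.setIS; apply: Rk_sub.
have l0 := lam_ge0 alpha.
have t0 : 0 <= t by case/andP: t01.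
have Ha := H t t01.
have e1 : (#|A|%:R : R) <= (m0hat p alpha)%:R by rewrite ler_nat.
have e2 : Num.sqrt (#|A|%:R : R) <= Num.sqrt (m0hat p alpha)%:R by rewrite ler_sqrt.
have c1R : ((#|Rk sigma k :&: A|)%:R : R) <= (iA p A t)%:R by rewrite ler_nat.
rewrite -(pmulrn (R:=R)) /=.
nra.
Qed.


Lemma ivt_nat (f : nat -> nat) v n : (v <= f 0)%N -> (f n <= v)%N ->
  (forall K, f K <= (f K.+1).+1)%N -> exists K, f K = v.
Proof.
move=> h0 hn hs; elim: n hn => [|n IH] hn.
  by exists 0%N; apply/eqP; rewrite eqn_leq hn h0.
case: (leqP (f n) v) => [hle|hlt]; first exact: IH.
exists n.+1; have := hs n; lia.
Qed.

Definition tailK m (sigma : 'S_m) (K : nat) : {set 'I_m} :=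
  [set sigma j | j : 'I_m & (K <= j)%N].

Lemma tail_step m (sigma : 'S_m) (C : {set 'I_m}) K :
  (#|C :|: tailK sigma K| <= (#|C :|: tailK sigma K.+1|).+1)%N.
Proof.
set T1 := [set sigma j | j : 'I_m & (val j == K)].
have sub : C :|: tailK sigma K \subset (C :|: tailK sigma K.+1) :|: T1.
  apply/fintype.subsetP => x; rewrite !finset.in_setU => /orP [->//|].
  case/imsetP => j; rewrite inE => hj ->.
  rewrite leq_eqVlt in hj; case/orP: hj => [/eqP heq|hlt].
  - by apply/orP; right; apply: imset_f; rewrite inE heq.
  - by apply/orP; left; apply/orP; right; apply: imset_f; rewrite inE.
have c1 : (#|T1| <= 1)%N.
  apply: leq_trans (leq_imset_card _ _) _.
  apply/card_le1_eqP => x y; rewrite !inE => /eqP hx /eqP hy.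
  by apply: val_inj; rewrite hx hy.
apply: leq_trans (subset_leq_card sub) _.
have := cardsUI (C :|: tailK sigma K.+1) T1.
lia.
Qed.

Lemma tail0 m (sigma : 'S_m) : tailK sigma 0 = [set: 'I_m].
Proof.
apply/setP => x; rewrite inE; apply/imsetP; exists (sigma^-1 x)%g.
  by rewrite inE.
by rewrite permKV.
Qed.

Lemma tailm m (sigma : 'S_m) : tailK sigma m = finset.set0.
Proof.
apply/setP => x; rewrite inE; apply/imsetP => -[j]; rewrite inE.
by rewrite leqNgt ltn_ord.
Qed.

Lemma exK m (sigma : 'S_m) (C : {set 'I_m}) m0 : (m0 <= m)%N ->
  exists K, (m0 <= #|C :|: tailK sigma K|)%N /\
            (#|C :|: tailK sigma K| = m0 \/ tailK sigma K = finset.set0).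
Proof.
move=> hm.
case: (leqP m0 #|C|) => hc.
  by exists m; rewrite tailm finset.setU0; split => //; right.
have h1 : (m0 <= #|C :|: tailK sigma 0|)%N.
  by rewrite tail0 finset.setUT cardsT card_ord.
have h2 : (#|C :|: tailK sigma m| <= m0)%N.
  by rewrite tailm finset.setU0 ltnW.
have [K HK] := @ivt_nat (fun K => #|C :|: tailK sigma K|) m0 m h1 h2
  (fun K => tail_step sigma C K).
by exists K; rewrite HK; split => //; left.
Qed.


Lemma B_phi0 (R : realType) m (alpha : R) (p : 'I_m -> R) (sigma : 'S_m)
  (halpha : 0 < alpha <= 1)
  (hp : forall j, 0 <= p j <= 1)
  (hsigma : forall i j : 'I_m, (i <= j)%N -> p (sigma i) <= p (sigma j))
  (A C : {set 'I_m}) K :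
  JERadm p alpha sigma A -> C \subset A ->
  (m0hat p alpha <= #|C :|: tailK sigma K|)%N ->
  (#|C :|: tailK sigma K| = m0hat p alpha \/ tailK sigma K = finset.set0) ->
  ~~ phiDKW p alpha (C :|: tailK sigma K).
Proof.
move=> hJ hCA hn hor.
set B := C :|: tailK sigma K.
set m0 := m0hat p alpha.
apply/phi0P => t t01; rewrite iA_eq.
set P := [set j | p j <= t].
set n := #|B|.
have l0 := lam_ge0 alpha.
have [t0 t1] : 0 <= t /\ t <= 1 by case/andP: t01.
have e1 : (m0%:R : R) <= n%:R by rewrite ler_nat.
have e2 : Num.sqrt (m0%:R : R) <= Num.sqrt n%:R by rewrite ler_sqrt.
have s0 : 0 <= Num.sqrt (m0%:R : R) by apply: sqrtr_ge0.
case: (pselect (exists2 j, j \in tailK sigma K & p j <= t)) => [[j hj hpj] | hno].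
- have En : n = m0.
    case: hor => // Et; by rewrite Et inE in hj.
  rewrite En.
  case: (eqVneq t 1) => [-> | tn1].
    have : (#|B :&: P| <= n)%N by apply: subset_leq_card; apply: finset.subsetIl.
    rewrite En -(ler_nat R) => h; nra.
  have tl1 : t < 1 by rewrite lt_neqAle tn1.
  have sub : ~: P \subset B.
    apply/fintype.subsetP => x; rewrite !inE => hx.
    case/imsetP: hj => j' ; rewrite inE => hKj' ej.
    apply/orP; right; rewrite -(permKV sigma x); apply: imset_f; rewrite inE.
    case: (leqP j' (sigma^-1 x)%g) => [h|h]; first exact: leq_trans hKj' h.
    have := hsigma _ _ (ltnW h); rewrite permKV -ej => hle.
    by move: hx; rewrite (le_trans hle hpj).
  have E1 := cardsID P B.
  have EE : B :\: P = ~: P by rewrite finset.setDE; apply/finset.setIidPr.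
  rewrite EE in E1.
  have E2 := cardsC P; rewrite card_ord in E2.
  have Ei : iall p t = #|P| by rewrite /iall iA_eq finset.setTI.
  have g := m0_le_g p alpha (t:=t) ltac:(by rewrite t0 tl1).
  have M0 : 0 <= (m%:R : R) - (iall p t)%:R by rewrite subr_ge0 ler_nat Ei -[X in (_ <= X)%N]E2 leq_addr.
  have tt : 0 <= t < 1 by rewrite t0 tl1.
  move: g; rewrite /gm0.
  move/(@Gequiv R t m0%:R (m%:R - (iall p t)%:R) (lam alpha) tt (ler0n _ _) M0 l0) => g.
  have E1R : (#|B :&: P|%:R : R) + #|~: P|%:R = n%:R by rewrite -natrD E1.
  have E2R : (#|P|%:R : R) + #|~: P|%:R = m%:R by rewrite -natrD E2.
  rewrite Ei in g.
  rewrite -En.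
  rewrite En in E1R.
  nra.
- have sub : B :&: P \subset C :&: P.
    apply/fintype.subsetP => x; rewrite !inE => /andP [/orP [hx|hx] hP].
      by rewrite hx hP.
    by exfalso; apply: hno; exists x.
  have nR0 : 0 <= (n%:R : R) * t + Num.sqrt n%:R * lam alpha.
    by apply: addr_ge0; apply: mulr_ge0 => //; apply: sqrtr_ge0.
  have cBC := subset_leq_card sub.
  case: (set_0Vmem (C :&: P)) => [E0 | [j0 hj0]].
    move: cBC; rewrite E0 cards0 leqn0 => /eqP ->; by [].
  have Pi0 : p (sigma (sigma^-1 j0)%g) <= t.
    by rewrite permKV; move: hj0; rewrite !inE => /andP [].
  case: (@arg_maxnP _ _ (fun k => p (sigma k) <= t) (fun k : 'I_m => val k) Pi0).
  move=> k hk hmax.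
  have PR : C :&: P \subset Rk sigma k :&: A.
    apply/fintype.subsetP => x; rewrite !inE => /andP [hxC hxP].
    rewrite (fintype.subsetP hCA _ hxC) andbT.
    rewrite -(permKV sigma x); apply: imset_f; rewrite inE.
    by apply: hmax; rewrite permKV.
  have cCR := subset_leq_card PR.
  move/forallP: hJ => /(_ k); rewrite /zetak le_min => /andP [_].
  rewrite floor_ge_int -(pmulrn (R:=R)) /= => hz.
  have c1 : (#|B :&: P|%:R : R) <= #|Rk sigma k :&: A|%:R.
    by rewrite ler_nat (leq_trans cBC cCR).
  have hk' : p (sigma k) <= t := hk.
  have m00 : (0 : R) <= m0%:R := ler0n _ _.
  have a1 : (m0%:R : R) * p (sigma k) <= m0%:R * t by rewrite ler_wpM2l.
  have a2 : (m0%:R : R) * t <= n%:R * t by rewrite ler_wpM2r.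
  have a3 : Num.sqrt (m0%:R : R) * lam alpha <= Num.sqrt n%:R * lam alpha by rewrite ler_wpM2r.
  lra.
Qed.

End Helpers.
Import Helpers.

Theorem mainTheorem12 (R : realType) (m : nat) (alpha : R) (p : 'I_m -> R)
  (sigma : 'S_m)
  (halpha : 0 < alpha <= 1)
  (hp : forall j, 0 <= p j <= 1)
  (hsigma : forall i j : 'I_m, (i <= j)%N -> p (sigma i) <= p (sigma j)) :
  forall S : {set 'I_m}, VIP p alpha S = VJER p alpha sigma S.
Proof.
move=> S; apply/eqP; rewrite eqn_leq; apply/andP; split.
- apply/bigmax_leqP => A hA; rewrite finset.setIC.
  apply: (leq_bigmax_cond (P := fun A => JERadm p alpha sigma A) (F := fun A => #|S :&: A|)).
  exact: phi0_adm.
- apply/bigmax_leqP => A hA.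
  have [K [h1 h2]] := exK sigma (S :&: A) (m0_le_m p alpha).
  have Hb := B_phi0 halpha hp hsigma hA (finset.subsetIr S A) h1 h2.
  apply: leq_trans _ (leq_bigmax_cond (P := fun A => ~~ phiDKW p alpha A) (F := fun A => #|A :&: S|) _ Hb).
  apply: subset_leq_card; apply/fintype.subsetP => x hx.
  move: hx; rewrite !inE => /andP [hS hA']; by rewrite hS hA'.
Qed.
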